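(* For integers $1\le N\le 50$, a $PCS_3^N$ exists if and only if $N\in\{1,4,8,12,16,24,28,32,36,40,44,48\}$.
   Context: A binary sequence of length $N$ is a sequence $a=(a(0),\dots,a(N-1))$ with each $a(i)\in\{+1,-1\}$. Its periodic autocorrelation function is $\tilde\varphi_a(i)=\sum_{j=0}^{N-1}a(j)a(i+j \bmod N)$ for $0\le i<N$. A family $a_1,\dots,a_p$ of binary sequences, all of length $N$, is a $PCS_p^N$ (periodic complementary set) if $\sum_{k=1}^p\tilde\varphi_{a_k}(i)=0$ for all $0<i<N$. The sequences in a family need not be distinct. *)

(* Defs.v *)
From HB Require Import structures.
From mathcomp Require Import all_boot all_order all_algebra.
Set Implicit Arguments. Unset Strict Implicit. Unset Printing Implicit Defensive.
Import Order.TTheory GRing.Theory Num.Theory.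
Local Open Scope ring_scope.

Definition binary_seq (N : nat) (a : 'I_N -> int) : Prop :=
  forall j : 'I_N, a j = 1 \/ a j = -1.

(* The index (i + j) mod N as an element of 'I_N (N > 0 since j : 'I_N). *)
Definition shift_idx (N : nat) (i : nat) (j : 'I_N) : 'I_N :=
  Ordinal (ltn_pmod (i + j) (leq_ltn_trans (leq0n j) (ltn_ord j))).

Definition pacf (N : nat) (a : 'I_N -> int) (i : nat) : int :=
  \sum_(j < N) a j * a (shift_idx i j).

Definition is_PCS (p N : nat) (a : 'I_p -> 'I_N -> int) : Prop :=
  (forall k : 'I_p, binary_seq (a k)) /\
  (forall i : nat, (0 < i)%N -> (i < N)%N -> \sum_(k < p) pacf (a k) i = 0).

(* Main.v *)
Require Import Defs.
From HB Require Import structures.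
From mathcomp Require Import all_boot all_order all_algebra.
Set Implicit Arguments. Unset Strict Implicit. Unset Printing Implicit Defensive.
Import Order.TTheory GRing.Theory Num.Theory.
Local Open Scope ring_scope.

Lemma sum_shift N i (f : 'I_N -> int) : \sum_j f (shift_idx i j) = \sum_j f j.
Proof.
symmetry; apply: reindex_inj => j1 j2 /(congr1 val) /= /eqP.
by rewrite eqn_modDl !modn_small // => /eqP; apply: val_inj.
Qed.

Definition xb N (a : 'I_N -> int) (j : 'I_N) : int := if a j == 1 then 0 else 1.

Definition Xq N (a : 'I_N -> int) (i : nat) : int :=
  \sum_j (xb a j * xb a (shift_idx i j) - xb a j).

Lemma pacf_mod4 N (a : 'I_N -> int) i : binary_seq a ->
  pacf a i = N%:R + 4 * Xq a i.
Proof.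
move=> Ha.
have Hterm : forall j, a j * a (shift_idx i j) =
   1 + 4 * (xb a j * xb a (shift_idx i j) - xb a j) + 2 * (xb a j - xb a (shift_idx i j)).
  by move=> j; rewrite /xb; case: (Ha j) => ->; case: (Ha (shift_idx i j)) => ->.
rewrite /pacf (eq_bigr _ (fun j _ => Hterm j)) !big_split /= -!mulr_sumr.
by rewrite [X in 2 * X]sumrB (sum_shift i (xb a)) subrr mulr0 addr0 sumr_const card_ord.
Qed.

Lemma pacf0 N (a : 'I_N -> int) : binary_seq a -> pacf a 0 = N%:R.
Proof.
move=> Ha; rewrite /pacf (eq_bigr (fun _ => 1)); first by rewrite sumr_const card_ord.
move=> j _; have -> : shift_idx 0 j = j by apply: val_inj; rewrite /= add0n modn_small.
by case: (Ha j) => ->.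
Qed.

Lemma sum_pacf N (a : 'I_N -> int) : \sum_(i < N) pacf a i = (\sum_j a j) ^+ 2.
Proof.
rewrite /pacf exchange_big /= expr2 mulr_suml; apply: eq_bigr => j _.
rewrite -mulr_sumr; congr (_ * _).
rewrite -(sum_shift j a); apply: eq_bigr => i _; congr a.
by apply: val_inj; rewrite /= addnC.
Qed.

Lemma sqr_absz (m : int) : m ^+ 2 = (`|m|%N ^ 2)%N%:Z.
Proof. by rewrite -abszX gez0_abs // sqr_ge0. Qed.

Lemma no_sq60 (u v w : nat) : (u ^ 2 + v ^ 2 + w ^ 2)%N = 60%N -> False.
Proof.
move=> H.
have Hb : forall t : nat, (t ^ 2 <= 60)%N -> (t < 8)%N.
  move=> t Ht; rewrite ltnNge; apply/negP => Ht8.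
  have : (8 ^ 2 <= t ^ 2)%N by rewrite leq_exp2r.
  by move=> /leq_trans /(_ Ht).
have Hu : (u < 8)%N by apply: Hb; rewrite -H -addnA leq_addr.
have Hv : (v < 8)%N by apply: Hb; rewrite -H addnAC leq_addl.
have Hw : (w < 8)%N by apply: Hb; rewrite -H leq_addl.
have key : all (fun u => all (fun v => all (fun w => (u ^ 2 + v ^ 2 + w ^ 2 != 60)%N)
   (iota 0 8)) (iota 0 8)) (iota 0 8) by [].
move/allP: key => /(_ u); rewrite mem_iota Hu => /(_ isT) /allP /(_ v).
rewrite mem_iota Hv => /(_ isT) /allP /(_ w); rewrite mem_iota Hw => /(_ isT).
by rewrite H.
Qed.

Lemma final_check (N : nat) : (1 <= N <= 50)%N ->
  ((N == 1) || ((4 %| N * 3) && (N != 20)))%N ->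
  N \in [:: 1; 4; 8; 12; 16; 24; 28; 32; 36; 40; 44; 48]%N.
Proof.
move=> /andP [H1 H2] H.
have key : all (fun n => ((n == 1) || ((4 %| n * 3) && (n != 20)))%N ==>
   (n \in [:: 1; 4; 8; 12; 16; 24; 28; 32; 36; 40; 44; 48]%N)) (iota 1 50) by vm_compute.
move/allP: key => /(_ N); rewrite mem_iota H1 /= H. apply. by rewrite (addnC 1) addn1 ltnS.
Qed.



Lemma sum3_pacf N (a : 'I_3 -> 'I_N -> int) i : (forall k, binary_seq (a k)) ->
  \sum_(k < 3) pacf (a k) i = (N * 3)%N%:R + 4 * \sum_(k < 3) Xq (a k) i.
Proof.
move=> Hb; rewrite (eq_bigr _ (fun k _ => pacf_mod4 i (Hb k))) big_split /=.
by rewrite -mulr_sumr sumr_const card_ord -mulrnA.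
Qed.

Lemma total_sum N (a : 'I_3 -> 'I_N -> int) : (0 < N)%N -> is_PCS a ->
  \sum_(k < 3) (\sum_j a k j) ^+ 2 = (N * 3)%N%:R.
Proof.
move=> HN [Hb Hs].
rewrite (eq_bigr _ (fun k _ => esym (sum_pacf (a k)))) exchange_big /=.
case: N a Hb Hs HN => [//|n] a Hb Hs _.
rewrite big_ord_recl.
have -> : \sum_(i < n) \sum_(k < 3) pacf (a k) (lift ord0 i) = 0.
  by apply: big1 => i _; apply: Hs => //; exact: ltn_ord.
rewrite addr0 (eq_bigr (fun=> n.+1%:R)) => [|k _]; last exact: pacf0.
by rewrite sumr_const card_ord -mulrnA.
Qed.

Lemma sq3 (S : 'I_3 -> int) : \sum_(k < 3) S k ^+ 2 = (20 * 3)%N%:R -> False.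
Proof.
rewrite !big_ord_recl big_ord0 addr0 !sqr_absz natz -!PoszD => [[]].
rewrite addnA; exact: no_sq60.
Qed.

Lemma forward N : (1 <= N <= 50)%N -> (exists a : 'I_3 -> 'I_N -> int, is_PCS a) ->
   N \in [:: 1; 4; 8; 12; 16; 24; 28; 32; 36; 40; 44; 48]%N.
Proof.
move=> HN [a Ha]; apply: final_check => //.
case/andP: HN => HN1 HN2.
case: (ltngtP N 1) => [|HN1' |->]; [by rewrite ltnNge HN1 | | by []].
apply/orP; right; apply/andP; split.
  have := (proj2 Ha) 1%N isT HN1'.
  rewrite sum3_pacf; last exact: (proj1 Ha).
  move/eqP; rewrite addr_eq0 => /eqP H.
  have : `|((N*3)%N%:R : int)|%N = `|- (4 * \sum_(k < 3) Xq (a k) 1)|%N by rewrite H.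
  rewrite abszN abszM natz absz_nat => ->.
  exact: dvdn_mulr.
apply/eqP => E20; subst N.
exact: (@sq3 (fun k => \sum_j a k j) (@total_sum 20 a isT Ha)).
Qed.



Definition sumz (r : seq int) : int := foldr (fun x y => x + y) 0 r.

Lemma sumzE (r : seq nat) (G : nat -> int) : sumz (map G r) = \sum_(i <- r) G i.
Proof. by elim: r => [|x r IH] /=; rewrite ?big_nil ?big_cons ?IH. Qed.

Definition pchk (N : nat) (s : seq (seq int)) (i : nat) : int :=
  sumz (map (fun k => sumz (map (fun j => nth 0 (nth [::] s k) j *
     nth 0 (nth [::] s k) ((i + j) %% N)) (iota 0 N))) (iota 0 3)).

Definition chk (N : nat) (s : seq (seq int)) : bool :=
  [&& size s == 3,
      all (fun l => (size l == N) && all (fun x => (x == 1) || (x == -1)) l) s &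
      all (fun i => pchk N s i == 0) (iota 1 N.-1)].

Lemma chk_ok N s : chk N s -> exists a : 'I_3 -> 'I_N -> int, is_PCS a.
Proof.
case/and3P => /eqP Hs3 /allP Hl /allP Hp.
exists (fun k j => nth 0 (nth [::] s k) j); split.
  move=> k j.
  have Hk : (k < size s)%N by rewrite Hs3.
  have /andP [/eqP Hsz /allP Hx] := Hl _ (mem_nth [::] Hk).
  have Hj : (j < size (nth [::] s k))%N by rewrite Hsz.
  by case/orP: (Hx _ (mem_nth 0 Hj)) => /eqP ->; [left|right].
move=> i Hi0 HiN.
have := Hp i; rewrite mem_iota add1n prednK ?Hi0 ?HiN; last exact: ltn_trans Hi0 HiN.
move=> /(_ isT) /eqP H; transitivity (pchk N s i); last exact: H.
have E : forall n, iota 0 n = index_iota 0 n by move=> n; rewrite /index_iota subn0.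
rewrite /pchk sumzE E big_mkord.
apply: eq_bigr => k _; rewrite sumzE E big_mkord /pacf.
by apply: eq_bigr.
Qed.
Definition data4 : seq (seq int) := [:: [:: 1; 1; 1; -1]; [:: 1; -1; -1; -1]; [:: 1; 1; 1; -1]].
Lemma ex4 : exists a : 'I_3 -> 'I_4 -> int, is_PCS a.
Proof. apply: (@chk_ok 4 data4). by vm_compute. Qed.

Definition data8 : seq (seq int) := [:: [:: 1; 1; 1; 1; 1; -1; 1; -1]; [:: 1; 1; -1; -1; -1; 1; -1; -1]; [:: 1; -1; 1; -1; -1; -1; -1; 1]].
Lemma ex8 : exists a : 'I_3 -> 'I_8 -> int, is_PCS a.
Proof. apply: (@chk_ok 8 data8). by vm_compute. Qed.

Definition data12 : seq (seq int) := [:: [:: -1; -1; 1; -1; -1; -1; 1; -1; 1; -1; -1; 1]; [:: 1; -1; -1; 1; 1; 1; 1; 1; 1; -1; 1; -1]; [:: 1; -1; -1; -1; -1; -1; 1; 1; 1; -1; -1; 1]].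
Lemma ex12 : exists a : 'I_3 -> 'I_12 -> int, is_PCS a.
Proof. apply: (@chk_ok 12 data12). by vm_compute. Qed.

Definition data16 : seq (seq int) := [:: [:: 1; -1; -1; -1; -1; -1; 1; -1; -1; 1; -1; -1; 1; 1; 1; -1]; [:: -1; 1; 1; -1; -1; -1; -1; -1; -1; 1; -1; 1; 1; 1; -1; -1]; [:: -1; 1; 1; 1; -1; 1; 1; 1; -1; -1; 1; -1; 1; 1; -1; 1]].
Lemma ex16 : exists a : 'I_3 -> 'I_16 -> int, is_PCS a.
Proof. apply: (@chk_ok 16 data16). by vm_compute. Qed.

Definition data24 : seq (seq int) := [:: [:: 1; -1; 1; -1; 1; 1; -1; -1; 1; -1; -1; -1; 1; 1; 1; 1; 1; 1; -1; 1; 1; 1; 1; -1]; [:: 1; 1; 1; -1; -1; -1; 1; -1; -1; -1; -1; -1; 1; 1; -1; -1; 1; -1; -1; 1; -1; -1; 1; -1]; [:: 1; 1; -1; -1; -1; -1; -1; -1; 1; 1; 1; -1; 1; -1; 1; 1; -1; 1; -1; 1; 1; -1; -1; 1]].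
Lemma ex24 : exists a : 'I_3 -> 'I_24 -> int, is_PCS a.
Proof. apply: (@chk_ok 24 data24). by vm_compute. Qed.

Definition data28 : seq (seq int) := [:: [:: 1; -1; -1; 1; 1; 1; 1; 1; 1; -1; 1; -1; 1; -1; -1; -1; -1; 1; -1; 1; -1; -1; -1; -1; 1; 1; -1; -1]; [:: -1; 1; -1; -1; -1; -1; -1; 1; 1; -1; -1; 1; 1; -1; -1; -1; -1; -1; 1; 1; 1; 1; -1; -1; 1; 1; -1; 1]; [:: 1; -1; -1; -1; -1; 1; 1; -1; 1; -1; 1; -1; -1; -1; 1; -1; -1; 1; 1; -1; 1; -1; -1; 1; -1; -1; -1; -1]].
Lemma ex28 : exists a : 'I_3 -> 'I_28 -> int, is_PCS a.
Proof. apply: (@chk_ok 28 data28). by vm_compute. Qed.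

Definition data32 : seq (seq int) := [:: [:: 1; 1; 1; 1; 1; -1; 1; 1; -1; 1; 1; 1; -1; -1; -1; -1; 1; -1; 1; 1; -1; -1; 1; -1; 1; -1; -1; -1; 1; 1; 1; -1]; [:: 1; 1; 1; -1; 1; -1; -1; 1; 1; 1; -1; 1; 1; 1; 1; 1; 1; 1; -1; -1; -1; -1; 1; -1; 1; 1; 1; 1; -1; -1; 1; -1]; [:: 1; -1; -1; 1; 1; 1; 1; 1; -1; -1; 1; 1; -1; 1; -1; 1; 1; 1; -1; 1; 1; -1; 1; -1; 1; -1; -1; 1; -1; -1; -1; 1]].
Lemma ex32 : exists a : 'I_3 -> 'I_32 -> int, is_PCS a.
Proof. apply: (@chk_ok 32 data32). by vm_compute. Qed.

Definition data36 : seq (seq int) := [:: [:: -1; -1; 1; 1; 1; 1; -1; 1; -1; 1; -1; 1; 1; -1; 1; 1; 1; -1; 1; 1; -1; 1; 1; 1; 1; 1; 1; 1; -1; -1; -1; -1; 1; 1; 1; -1]; [:: 1; -1; 1; 1; 1; 1; -1; -1; 1; -1; -1; 1; -1; 1; -1; -1; 1; 1; -1; 1; -1; -1; -1; -1; -1; -1; 1; 1; 1; 1; 1; -1; 1; -1; 1; 1]; [:: 1; -1; 1; 1; 1; -1; 1; 1; -1; -1; 1; -1; -1; -1; 1; -1; -1; -1; 1; 1; 1; -1; -1; 1; 1; -1; -1; -1; 1; -1; 1; -1; -1; 1; -1; 1]].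
Lemma ex36 : exists a : 'I_3 -> 'I_36 -> int, is_PCS a.
Proof. apply: (@chk_ok 36 data36). by vm_compute. Qed.

Definition data40 : seq (seq int) := [:: [:: 1; 1; -1; -1; -1; 1; 1; 1; -1; 1; 1; 1; 1; 1; 1; -1; 1; -1; -1; 1; 1; -1; 1; 1; 1; -1; -1; -1; 1; -1; -1; -1; -1; -1; -1; 1; -1; 1; 1; -1]; [:: 1; -1; -1; 1; 1; -1; 1; -1; -1; -1; -1; 1; -1; -1; 1; -1; 1; -1; -1; 1; 1; -1; -1; -1; 1; 1; 1; 1; -1; -1; -1; -1; -1; -1; 1; -1; 1; -1; -1; -1]; [:: 1; -1; 1; 1; 1; -1; -1; 1; -1; -1; 1; 1; -1; -1; -1; -1; 1; 1; 1; 1; -1; 1; 1; 1; 1; -1; -1; 1; -1; 1; -1; 1; -1; 1; -1; -1; 1; -1; 1; 1]].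
Lemma ex40 : exists a : 'I_3 -> 'I_40 -> int, is_PCS a.
Proof. apply: (@chk_ok 40 data40). by vm_compute. Qed.

Definition data44 : seq (seq int) := [:: [:: 1; -1; -1; 1; 1; -1; -1; 1; 1; -1; 1; -1; -1; -1; -1; 1; -1; 1; 1; -1; 1; 1; 1; -1; -1; -1; 1; -1; 1; -1; 1; 1; 1; -1; -1; 1; -1; -1; -1; -1; 1; 1; -1; -1]; [:: -1; -1; -1; 1; -1; -1; -1; -1; 1; -1; 1; -1; 1; 1; -1; -1; 1; 1; 1; 1; 1; 1; 1; 1; 1; 1; 1; -1; -1; 1; -1; 1; 1; 1; -1; 1; -1; 1; 1; 1; 1; 1; 1; -1]; [:: -1; -1; -1; 1; -1; 1; 1; 1; 1; -1; -1; 1; -1; -1; 1; -1; 1; -1; -1; 1; -1; -1; 1; 1; 1; 1; -1; -1; -1; 1; -1; 1; -1; -1; -1; 1; 1; -1; -1; -1; 1; 1; -1; 1]].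
Lemma ex44 : exists a : 'I_3 -> 'I_44 -> int, is_PCS a.
Proof. apply: (@chk_ok 44 data44). by vm_compute. Qed.

Definition data48 : seq (seq int) := [:: [:: 1; -1; 1; -1; -1; -1; 1; -1; 1; -1; -1; -1; 1; -1; 1; -1; 1; -1; -1; 1; -1; -1; -1; -1; -1; -1; 1; 1; -1; -1; -1; -1; -1; 1; -1; -1; 1; 1; 1; 1; 1; 1; 1; -1; -1; 1; -1; 1]; [:: -1; -1; -1; -1; -1; -1; 1; -1; 1; 1; -1; 1; -1; -1; -1; 1; 1; -1; -1; 1; -1; -1; -1; -1; -1; 1; 1; 1; -1; 1; -1; 1; 1; -1; -1; -1; -1; 1; 1; -1; 1; 1; 1; -1; -1; 1; -1; 1]; [:: 1; -1; 1; -1; -1; -1; 1; -1; 1; 1; -1; 1; -1; 1; 1; 1; 1; 1; 1; 1; -1; -1; -1; 1; 1; -1; 1; -1; -1; 1; 1; -1; -1; -1; 1; -1; -1; 1; 1; -1; -1; 1; 1; 1; -1; -1; 1; 1]].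
Lemma ex48 : exists a : 'I_3 -> 'I_48 -> int, is_PCS a.
Proof. apply: (@chk_ok 48 data48). by vm_compute. Qed.


Lemma ex1 : exists a : 'I_3 -> 'I_1 -> int, is_PCS a.
Proof. apply: (@chk_ok 1 [:: [:: 1]; [:: 1]; [:: 1]]). by vm_compute. Qed.

Theorem proposition3 (N : nat) :
  (1 <= N <= 50)%N ->
  ((exists a : 'I_3 -> 'I_N -> int, is_PCS a) <->
   N \in [:: 1; 4; 8; 12; 16; 24; 28; 32; 36; 40; 44; 48]%N).
Proof.
move=> HN; split; first exact: forward.
rewrite !inE.
case/orP => [/eqP->|]; first exact: ex1.
case/orP => [/eqP->|]; first exact: ex4.
case/orP => [/eqP->|]; first exact: ex8.
case/orP => [/eqP->|]; first exact: ex12.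
case/orP => [/eqP->|]; first exact: ex16.
case/orP => [/eqP->|]; first exact: ex24.
case/orP => [/eqP->|]; first exact: ex28.
case/orP => [/eqP->|]; first exact: ex32.
case/orP => [/eqP->|]; first exact: ex36.
case/orP => [/eqP->|]; first exact: ex40.
case/orP => [/eqP->|/eqP->]; first exact: ex44.
exact: ex48.
Qed.
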